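(* Let $G'=(V',E')$ be a substructure of an oriented graph $G$ with $|V'|\ge|E'|$, and let $\omega\in\mathbb{C}$ with $|\omega|=1$. If $\det L_\omega(G')\neq 0$, then $G'$ is all-regular, i.e. every connected component $(V'_i,E'_i)$ of $G'$ satisfies $|V'_i|=|E'_i|$.
   Context: An oriented graph $G=(V,E)$ is a finite directed graph with no loops, no multiple arcs, and no pair of opposite arcs. A substructure of $G$ is a pair $G'=(V',E')$ with $V'\subseteq V$, $E'\subseteq E$; arcs of $E'$ may have endpoints outside $V'$. The Hermitian Laplacian $L_\omega(G')$ is the $V'\times V'$ matrix with diagonal entry at $u$ equal to the number of arcs of $E'$ incident with $u$, and $(u,v)$ entry ($u\ne v$) equal to $-\omega$ if some arc of $E'$ goes $u\to v$, $-\overline\omega$ if some arc of $E'$ goes $v\to u$, $0$ otherwise. Two vertices $u,v\in V'$ are connected in $G'$ if there is a path between them (ignoring arc directions) with all vertices in $V'$ and all arcs in $E'$; the equivalence classes $V'_i$ give the connected components $(V'_i,E'_i)$, where $E'_i$ is the set of arcs of $E'$ with at least one endpoint in $V'_i$. A substructure is regular if $|V'|=|E'|$ and all-regular if each connected component is regular. *)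

(* Defs.v *)
From HB Require Import structures.
From mathcomp Require Import all_boot all_order all_algebra.
Set Implicit Arguments.
Unset Strict Implicit.
Unset Printing Implicit Defensive.
Import Order.TTheory GRing.Theory Num.Theory.
Local Open Scope ring_scope.

(* An oriented graph on a finite vertex type V: a set of arcs (u,v) = u -> v,
   with no loops and no pair of opposite arcs (multiple arcs are excluded
   automatically since E is a set). *)
Definition oriented_graph (V : finType) (E : {set V * V}) : Prop :=
  (forall u : V, (u, u) \notin E) /\
  (forall u v : V, (u, v) \in E -> (v, u) \notin E).

Definition substructure (V : finType) (E : {set V * V})
    (V' : {set V}) (E' : {set V * V}) : Prop :=
  E' \subset E.

Definition arc_degree (V : finType) (E' : {set V * V}) (u : V) : nat :=
  #|[set e in E' | (e.1 == u) || (e.2 == u)]|.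

Definition herm_laplacian (C : numClosedFieldType) (omega : C) (V : finType)
    (V' : {set V}) (E' : {set V * V}) : 'M[C]_#|V'| :=
  \matrix_(i < #|V'|, j < #|V'|)
    let u := enum_val i in let v := enum_val j in
    if u == v then (arc_degree E' u)%:R
    else if (u, v) \in E' then - omega
    else if (v, u) \in E' then - (omega^*)%R
    else 0.

Definition sub_adj (V : finType) (V' : {set V}) (E' : {set V * V}) : rel V :=
  fun x y => [&& x \in V', y \in V' & ((x, y) \in E') || ((y, x) \in E')].

Definition comp_vertices (V : finType) (V' : {set V}) (E' : {set V * V}) (u : V)
  : {set V} := [set v in V' | connect (sub_adj V' E') u v].

Definition comp_arcs (V : finType) (V' : {set V}) (E' : {set V * V}) (u : V)
  : {set V * V} :=
  [set e in E' | (e.1 \in comp_vertices V' E' u) || (e.2 \in comp_vertices V' E' u)].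

Definition all_regular (V : finType) (V' : {set V}) (E' : {set V * V}) : Prop :=
  forall u, u \in V' -> #|comp_vertices V' E' u| = #|comp_arcs V' E' u|.

(* Main.v *)
Require Import Defs.
From mathcomp Require Import all_boot all_order all_algebra.
From mathcomp Require Import zify.
Import Order.TTheory GRing.Theory Num.Theory.
Set Implicit Arguments. Unset Strict Implicit.
Local Open Scope ring_scope.

Definition wv (C : numClosedFieldType) (V : finType) (om : C) (e : V * V) (x : V) : C :=
  (x == e.1)%:R - om^* * (x == e.2)%:R.

Lemma wv_prod (C : numClosedFieldType) (V : finType) (om : C) (e : V * V) (x v : V) :
  e.1 != e.2 -> `|om| = 1 ->
  wv om e x * (wv om e v)^* =
  if x == v then ((e.1 == x) || (e.2 == x))%:R
  else (if e == (x, v) then - om else 0) + (if e == (v, x) then - om^* else 0).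
Proof.
case: e => a b /= ab om1.
have oo : om^* * om = 1 by rewrite -normCKC om1 expr1n.
rewrite /wv /= rmorphB rmorphM /= conjCK !conjC_nat.
have ba : (b == a) = false by apply/negbTE; rewrite eq_sym.
rewrite -!pair_eqE /=.
have pq : forall y, ~~ ((y == a) && (y == b)).
  by move=> y; apply/andP => [[/eqP -> /eqP]]; move/eqP: ab.
rewrite (eq_sym a x) (eq_sym b x) (eq_sym a v) (eq_sym b v).
case: (x =P v) => [xv|xv]; first subst v.
  move: (pq x); case: (x == a); case: (x == b) => //= _;
    rewrite ?mulr1 ?mulr0 ?subr0 ?sub0r ?mul0r ?mulrN ?mulNr ?opprK //.
  by rewrite mulr1.
have xva : ~~ ((x == a) && (v == a)) by apply/negP => /andP[/eqP ? /eqP ?]; apply: xv; congruence.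
have xvb : ~~ ((x == b) && (v == b)) by apply/negP => /andP[/eqP ? /eqP ?]; apply: xv; congruence.
move: (pq x) (pq v) xva xvb.
case: (x == a); case: (x == b); case: (v == a); case: (v == b) => //= _ _ _ _;
  rewrite ?mulr1 ?mulr0 ?subr0 ?sub0r ?mul0r ?mulrN ?mulNr ?opprK ?addr0 ?add0r ?oppr0 ?mul1r //;
  by rewrite ?mulr1 ?mulr0 ?oppr0.
Qed.

Lemma sum_pick (C : numClosedFieldType) (T : finType) (A : {set T}) (a : T) (c : C) :
  \sum_(e in A) (if e == a then c else 0) = if a \in A then c else 0.
Proof.
rewrite -big_mkcondr /=.
case aA: (a \in A).
  rewrite (eq_bigl (pred1 a)) ?big_pred1_eq // => e /=.
  by case: (e =P a) => [->|]; rewrite ?aA ?andbF ?andbT.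
rewrite big_pred0 // => e; case: (e =P a) => [->|]; by rewrite ?aA ?andbF.
Qed.

Lemma sum_nat_card (C : numClosedFieldType) (T : finType) (A : {set T}) (P : pred T) :
  \sum_(e in A) (P e)%:R = #|[set e in A | P e]|%:R :> C.
Proof.
rewrite -natr_sum; congr (_%:R).
rewrite -big_mkcondr /= sum1_card; apply: eq_card => e; by rewrite inE.
Qed.

Lemma lap_entry (C : numClosedFieldType) (V : finType) (E E' : {set V * V}) (om : C) (x v : V) :
  oriented_graph E -> E' \subset E -> `|om| = 1 ->
  \sum_(e in E') wv om e x * (wv om e v)^* =
  (if x == v then (arc_degree E' x)%:R
   else if (x, v) \in E' then - om
   else if (v, x) \in E' then - (om^*)%R
   else 0).
Proof.
move=> [noloop orient] /subsetP sE om1.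
rewrite (eq_bigr (fun e => if x == v then ((e.1 == x) || (e.2 == x))%:R
  else (if e == (x, v) then - om else 0) + (if e == (v, x) then - om^* else 0))); last first.
  move=> e eE; apply: wv_prod om1.
  by case: e eE => a b /sE eE /=; apply/eqP => ab; subst b; move: (noloop a); rewrite eE.
case: (x =P v) => [->|xv].
  by rewrite sum_nat_card.
rewrite big_split /= !sum_pick.
case xvE: ((x, v) \in E'); case vxE: ((v, x) \in E'); rewrite ?addr0 ?add0r //.
by move: (orient _ _ (sE _ xvE)); rewrite (sE _ vxE).
Qed.

Lemma comp_sub (V : finType) (V' : {set V}) (E' : {set V * V}) u :
  comp_vertices V' E' u \subset V'.
Proof. by apply/subsetP => x; rewrite inE => /andP[]. Qed.

Lemma kernel_det (C : numClosedFieldType) (V : finType) (E : {set V * V})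
    (V' : {set V}) (E' : {set V * V}) (om : C) u :
  oriented_graph E -> E' \subset E -> `|om| = 1 -> u \in V' ->
  (#|comp_arcs V' E' u| < #|comp_vertices V' E' u|)%N ->
  \det (herm_laplacian om V' E') = 0.
Proof.
move=> oG sE om1 uV lt.
set K := comp_vertices V' E' u; set A := comp_arcs V' E' u.
have uK : u \in K by rewrite inE uV connect0.
have KV := subsetP (comp_sub V' E' u).
pose M : 'M[C]_(#|K|, #|A|) := \matrix_(i, k) wv om (enum_val k) (enum_val i).
have : \rank (kermx M) != 0%N.
  rewrite mxrank_ker; by rewrite subn_eq0 -ltnNge; exact: leq_ltn_trans (rank_leq_col M) lt.
rewrite mxrank_eq0 => nzk.
have [i nzi] : exists i, row i (kermx M) != 0.
  case: (pickP (fun i => row i (kermx M) != 0)) => [i Hi|H]; first by exists i.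
  by case/negP: nzk; apply/eqP/row_matrixP => i; move: (H i) => /negbFE/eqP ->; rewrite row0.
set z := row i (kermx M).
have zM : z *m M = 0 by apply/sub_kermxP; exact: row_sub.
pose Y (x : V) : C := if x \in K then z 0 (enum_rank_in uK x) else 0.
pose y : 'rV[C]_#|V'| := \row_j Y (enum_val j).
apply/eqP/det0P; exists y.
  have [k nzk'] : exists k, z 0 k != 0.
    case: (pickP (fun k => z 0 k != 0)) => [k Hk|H]; first by exists k.
    by case/negP: nzi; apply/eqP/rowP => k; move: (H k) => /negbFE/eqP ->; rewrite mxE.
  have xK : enum_val k \in K := enum_valP k.
  have xV := KV _ xK.
  apply/negP => /eqP/rowP/(_ (enum_rank_in xV (enum_val k))).
  rewrite !mxE enum_rankK_in // /Y xK enum_valK_in => zk.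
  by move: nzk'; rewrite zk eqxx.
apply/rowP => j; rewrite !mxE.
have -> : \sum_j0 y 0 j0 * herm_laplacian om V' E' j0 j =
    \sum_(x in V') Y x * (\sum_(e in E') wv om e x * (wv om e (enum_val j))^*).
  by rewrite [RHS]big_enum_val; apply: eq_bigr => k _; rewrite !mxE /= (lap_entry _ _ oG sE om1).
under eq_bigr do rewrite big_distrr.
rewrite exchange_big /=; apply: big1 => e eE.
under eq_bigr do rewrite mulrA.
rewrite -big_distrl /=.
suff -> : \sum_(x in V') Y x * wv om e x = 0 by rewrite mul0r.
case eA: (e \in A).
  rewrite (big_setID K) /= (setIidPr (comp_sub V' E' u)).
  rewrite [X in _ + X]big1 ?addr0; last first.
    by move=> x; rewrite inE => /andP[/negbTE xK _]; rewrite /Y xK mul0r.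
  rewrite big_enum_val.
  have := congr1 (fun m : 'rV[C]_#|A| => m 0 (enum_rank_in eA e)) zM; rewrite !mxE => h; apply: etrans h.
  apply: eq_bigr => k _; rewrite /Y enum_valP enum_valK_in !mxE enum_rankK_in //.
apply: big1 => x xV; rewrite /Y; case xK: (x \in K); last by rewrite mul0r.
have h1 : (x == e.1) = false by apply/negbTE/eqP => h; move: eA; rewrite inE eE -h xK.
have h2 : (x == e.2) = false by apply/negbTE/eqP => h; move: eA; rewrite inE eE -h xK orbT.
by rewrite /wv h1 h2 mulr0 subr0 mulr0.
Qed.

Lemma card_sum_nat (T : finType) (A : {set T}) (Q : pred T) :
  #|[set e in A | Q e]| = (\sum_(e in A) Q e)%N.
Proof. by rewrite -big_mkcondr /= sum1_card; apply: eq_card => e; rewrite inE. Qed.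

Theorem mainTheorem4 (C : numClosedFieldType) (V : finType) (E : {set V * V})
    (V' : {set V}) (E' : {set V * V}) (omega : C) :
  oriented_graph E ->
  substructure E V' E' ->
  (#|E'| <= #|V'|)%N ->
  `|omega| = 1 ->
  \det (herm_laplacian omega V' E') != 0 ->
  all_regular V' E'.
Proof.
move=> oG sE cardle om1 detnz.
have symA : symmetric (sub_adj V' E').
  by move=> x y; rewrite /sub_adj andbCA orbC.
have symR := sym_connect_sym symA.
have compE : forall x y, connect (sub_adj V' E') x y ->
    comp_vertices V' E' x = comp_vertices V' E' y.
  move=> x y Rxy; apply/setP => w; rewrite !inE; congr (_ && _).
  apply/idP/idP => h; first by apply: connect_trans h; rewrite symR.
  exact: connect_trans Rxy h.
have le : forall w, w \in V' ->
    (#|comp_vertices V' E' w| <= #|comp_arcs V' E' w|)%N.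
  move=> w wV; rewrite leqNgt; apply/negP => lt.
  by move: detnz; rewrite (kernel_det oG sE om1 wV lt) eqxx.
pose P := equivalence_partition (connect (sub_adj V' E')) V'.
have partP : partition P V'.
  apply: equivalence_partitionP => x y z _ _ _; split; first exact: connect0.
  move=> Rxy; apply/idP/idP => h; last exact: connect_trans Rxy h.
  by apply: connect_trans h; rewrite symR.
have PE : forall B, B \in P -> exists2 w, w \in V' & B = comp_vertices V' E' w.
  by move=> B /imsetP[w wV ->]; exists w.
have compP : forall w, w \in V' -> comp_vertices V' E' w \in P.
  by move=> w wV; apply/imsetP; exists w.
have Bcomp : forall B x, B \in P -> x \in B -> B = comp_vertices V' E' x.
  move=> B x /PE[w wV ->]; rewrite inE => /andP[_ Rwx]; exact: compE.
have BV : forall B x, B \in P -> x \in B -> x \in V'.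
  by move=> B x /PE[w wV ->]; rewrite inE => /andP[].
pose arcs (B : {set V}) := [set e in E' | (e.1 \in B) || (e.2 \in B)].
have sumV : #|V'| = (\sum_(B in P) #|B|)%N := card_partition partP.
have sumA : (\sum_(B in P) #|arcs B| <= #|E'|)%N.
  under eq_bigr => B _ do rewrite /arcs card_sum_nat.
  rewrite exchange_big /= -[X in (_ <= X)%N]sum1_card; apply: leq_sum => e eE.
  rewrite -big_mkcondr /= sum1_card.
  apply/card_le1_eqP => B1 B2 /andP[B1P Q1] /andP[B2P Q2].
  have e12 : e.1 \in V' -> e.2 \in V' ->
      comp_vertices V' E' e.1 = comp_vertices V' E' e.2.
    move=> h1 h2; apply: compE; apply: connect1.
    by rewrite /sub_adj h1 h2 -surjective_pairing eE.
  case/orP: Q1 => h1; case/orP: Q2 => h2;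
    rewrite (Bcomp _ _ B1P h1) (Bcomp _ _ B2P h2) //.
    by rewrite e12 // ?(BV _ _ B1P h1) ?(BV _ _ B2P h2).
  by rewrite e12 // ?(BV _ _ B1P h1) ?(BV _ _ B2P h2).
have leB : forall B, B \in P -> (#|B| <= #|arcs B|)%N.
  by move=> B /PE[w wV ->]; exact: le.
move=> u uV; apply/eqP; rewrite eqn_leq le //= leqNgt; apply/negP => lt.
have : (\sum_(B in P) #|B| < \sum_(B in P) #|arcs B|)%N.
  rewrite (bigD1 (comp_vertices V' E' u)) ?compP //=.
  rewrite [X in (_ < X)%N](bigD1 (comp_vertices V' E' u)) ?compP //=.
  rewrite -addSn; apply: leq_add => //; apply: leq_sum => B /andP[BP _]; exact: leB.
lia.
Qed.
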